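(* Consider a hierarchical tensor factorization with mode tree $\mathcal T$ whose weight matrices evolve under gradient flow on $\phi_H$ for $t\ge0$. For any $\nu\in\mathrm{int}(\mathcal T)$, $\nu_c\in C(\nu)$ and $r\in[R_\nu]$: $$\frac{d}{dt}\|W^{(\nu)}_{r,:}(t)\|^2=2\sigma_{\nu,r}(t)\big\langle-\nabla\mathcal L_H(\mathcal W_H(t)),\mathcal E_{\nu,r}(t)\big\rangle=\frac{d}{dt}\|W^{(\nu_c)}_{:,r}(t)\|^2.$$
   Context: Fix $N\in\mathbb N$, $D_1,\dots,D_N\in\mathbb N$; $[K]:=\{1,\dots,K\}$; norms are Frobenius norms, $\langle\cdot,\cdot\rangle$ the entrywise inner product, $\otimes$ the tensor product. A mode tree $\mathcal T$ over $[N]$ is a rooted tree whose nodes are labeled by subsets of $[N]$, with exactly $N$ leaves labeled $\{1\},\dots,\{N\}$, and where each interior node's label is the union of its children's labels; nodes are identified with labels, root $[N]$, $\mathrm{int}(\mathcal T)$ interior nodes, $Pa(\nu)$ parent, $C(\nu)$ children (fixed order). A hierarchical tensor factorization has $R_\nu\in\mathbb N$ ($\nu\in\mathrm{int}(\mathcal T)$), $R_{Pa([N])}:=1$, $R_{\{n\}}:=D_n$, weight matrices $W^{(\nu)}\in\mathbb R^{R_\nu\times R_{Pa(\nu)}}$. Intermediate tensors: $\mathcal W^{(\{n\},r)}:=W^{(\{n\})}_{:,r}$; for $\nu\in\mathrm{int}(\mathcal T)\setminus\{[N]\}$ (leaves to root), $r\in[R_{Pa(\nu)}]$: $\mathcal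 W^{(\nu,r)}:=\pi_\nu\big(\sum_{r'=1}^{R_\nu}W^{(\nu)}_{r',r}\bigotimes_{\nu_c\in C(\nu)}\mathcal W^{(\nu_c,r')}\big)$; end tensor $\mathcal W_H:=\pi_{[N]}\big(\sum_{r'=1}^{R_{[N]}}W^{([N])}_{r',1}\bigotimes_{\nu_c\in C([N])}\mathcal W^{(\nu_c,r')}\big)$, where $\pi_\nu$ permutes modes (ordered by children, each child's elements ascending) into ascending order of the elements of $\nu$. $\sigma_{\nu,r}:=\|W^{(\nu)}_{r,:}\|\prod_{\nu_c\in C(\nu)}\|W^{(\nu_c)}_{:,r}\|$. $\mathcal E_{\nu,r}$ is the end tensor obtained from the same construction except that, for every $r'\in[R_{Pa(\nu)}]$, the tensor produced at node $\nu$ (the end tensor itself if $\nu=[N]$) is replaced by $\pi_\nu\big(\sigma_{\nu,r}^{-1}W^{(\nu)}_{r,r'}\bigotimes_{\nu_c\in C(\nu)}\mathcal W^{(\nu_c,r)}\big)$; $\mathcal E_{\nu,r}:=0$ if $\sigma_{\nu,r}=0$. $\mathcal L_H:\mathbb R^{D_1\times\cdots\times D_N}\to\mathbb R_{\ge0}$ is differentiable and locally smooth, $\phi_H((W^{(\nu)})_\nu):=\mathcal L_H(\mathcal W_H)$, gradient flow: $\frac{d}{dt}W^{(\nu)}(t)=-\frac{\partial}{\partial W^{(\nu)}}\phi_H((W^{(\nu')}(t))_{\nu'})$ for all $\nu\in\mathcal T$, $t\ge0$; time-$t$ quantities are computed from the weights at time $t$. *)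

(* Defs.v *)
From HB Require Import structures.
From mathcomp Require Import all_boot all_order all_algebra.
From mathcomp Require Import all_classical all_reals all_analysis.
Set Implicit Arguments. Unset Strict Implicit. Unset Printing Implicit Defensive.
Import Order.TTheory GRing.Theory Num.Theory.
Import numFieldNormedType.Exports.
Local Open Scope ring_scope.

Section HTF.
Variable R : realType.
Variable N : nat.

(** Nodes are identified with their labels (subsets of [N],
    here {set 'I_N}, modes 0-based); the tree is given by its node set [T]
    and its parent map [Pa] (meaningful on non-root nodes). *)

Definition root : {set 'I_N} := [set: 'I_N].

Definition children (T : {set {set 'I_N}}) (Pa : {set 'I_N} -> {set 'I_N})
  (nu : {set 'I_N}) : {set {set 'I_N}} :=
  [set c in T | (c != root) && (Pa c == nu)].

Definition is_leaf (T : {set {set 'I_N}}) (Pa : {set 'I_N} -> {set 'I_N}) (nu : {set 'I_N}) : bool := children T Pa nu == finset.set0.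

Definition int_node (T : {set {set 'I_N}}) (Pa : {set 'I_N} -> {set 'I_N}) (nu : {set 'I_N}) : bool := (nu \in T) && ~~ is_leaf T Pa nu.

Definition is_mode_tree (T : {set {set 'I_N}}) (Pa : {set 'I_N} -> {set 'I_N}) : Prop :=
  (root \in T) /\
  [/\ (forall nu, nu \in T -> nu != root -> Pa nu \in T),
      (forall nu, nu \in T -> exists k, iter k Pa nu = root),
      (forall n : 'I_N, (finset.set1 n) \in T),
      (forall nu, nu \in T -> is_leaf T Pa nu <-> exists n : 'I_N, nu = (finset.set1 n)) &
      (forall nu, nu \in T -> ~~ is_leaf T Pa nu ->
         nu = \bigcup_(c in children T Pa nu) c)].

(** A tensor "over the modes of nu" is a function of the full multi-index that
    only reads the coordinates in nu; the tensor product of tensors over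
    disjoint mode sets is then the pointwise product, and the mode
    permutation pi_nu (sorting modes ascending) is the identity. *)
Variable D : 'I_N -> nat.

Definition idx := {dffun forall n : 'I_N, 'I_(D n)}.
Definition tensor := idx -> R.

Definition tdot (X Y : tensor) : R := \sum_(i : idx) X i * Y i.
Definition tnorm (X : tensor) : R := Num.sqrt (tdot X X).

Definition has_gradient (L : tensor -> R) (X G : tensor) : Prop :=
  forall e : R, 0 < e -> exists2 d : R, 0 < d & forall H : tensor,
    tnorm H < d ->
    `| L (fun i => X i + H i) - L X - tdot G H | <= e * tnorm H.

Definition locally_smooth (gL : tensor -> tensor) : Prop :=
  forall X : tensor, exists2 d : R, 0 < d & exists K : R,
    forall Y Z : tensor,
      tnorm (fun i => Y i - X i) < d -> tnorm (fun i => Z i - X i) < d ->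
      tnorm (fun i => gL Y i - gL Z i) <= K * tnorm (fun i => Y i - Z i).

(** * Hierarchical tensor factorization.
    Weights: W nu is the matrix W^(nu), indices 0-based, W nu i j being the
    (i,j) entry for i < R_nu, j < R_{Pa(nu)}; other entries are unused. *)
Definition weights := {set 'I_N} -> nat -> nat -> R.

Variable T : {set {set 'I_N}}.
Variable Pa : {set 'I_N} -> {set 'I_N}.
Variable Rint : {set 'I_N} -> nat.

Definition rk (nu : {set 'I_N}) : nat :=
  if [pick n : 'I_N | nu == (finset.set1 n)] is Some n then D n else Rint nu.

Definition prk (nu : {set 'I_N}) : nat :=
  if nu == root then 1%N else rk (Pa nu).

Definition rownorm2 (W : weights) nu r : R := \sum_(j < prk nu) W nu r j ^+ 2.
Definition colnorm2 (W : weights) nu r : R := \sum_(i < rk nu) W nu i r ^+ 2.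

Definition sigma (W : weights) nu r : R :=
  Num.sqrt (rownorm2 W nu r) * \prod_(c in children T Pa nu) Num.sqrt (colnorm2 W c r).

(** The bottom-up construction, with an optional override [ov nu r] of the
    tensor produced at node nu for parent index r; [k] is fuel (the depth of
    a mode tree over [N] is at most N). *)
Fixpoint tens (ov : {set 'I_N} -> nat -> option tensor) (W : weights)
   (k : nat) (nu : {set 'I_N}) (r : nat) : tensor :=
  if ov nu r is Some X then X else
  match k with
  | 0 => fun _ => 0
  | k'.+1 =>
    if [pick n : 'I_N | nu == (finset.set1 n)] is Some n then
      fun i => W nu (nat_of_ord (i n)) r
    else
      fun i => \sum_(r' < rk nu)
                  W nu r' r * \prod_(c in children T Pa nu) tens ov W k' c r' i
  end.

Definition no_ov : {set 'I_N} -> nat -> option tensor := fun _ _ => None.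

Definition itens (W : weights) nu r : tensor := tens no_ov W N nu r.

Definition end_tensor (W : weights) : tensor := tens no_ov W N root 0.

Definition E_tensor (W : weights) (nu : {set 'I_N}) (r : nat) : tensor :=
  if sigma W nu r == 0 then fun _ => 0 else
  let ov := fun mu r' =>
    if mu == nu then
      Some (fun i => (sigma W nu r)^-1 * W nu r r'
                     * \prod_(c in children T Pa nu) itens W c r i)
    else None in
  tens ov W N root 0.

Definition phi (L : tensor -> R) (W : weights) : R := L (end_tensor W).

Definition upd (W : weights) nu i j (s : R) : weights :=
  fun mu a b => if [&& mu == nu, a == i & b == j] then W mu a b + s else W mu a b.

Definition dphi (L : tensor -> R) (W : weights) nu i j : R :=
  derive1 (fun s : R => phi L (upd W nu i j s)) 0.

Definition gradient_flow (L : tensor -> R) (Wt : R -> weights) : Prop :=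
  forall t : R, 0 <= t -> forall nu, nu \in T -> forall i j : nat,
    (i < rk nu)%N -> (j < prk nu)%N ->
    is_derive t 1 (fun s : R => Wt s nu i j) (- dphi L (Wt t) nu i j).

End HTF.

(* Main.v *)
Require Import Defs.
From HB Require Import structures.
From mathcomp Require Import all_boot all_order all_algebra.
From mathcomp Require Import all_classical all_reals all_analysis.
From mathcomp Require Import ring lra zify.
Import Order.TTheory GRing.Theory Num.Theory.
Import numFieldNormedType.Exports.
Local Open Scope ring_scope.
Set Implicit Arguments. Unset Strict Implicit. Unset Printing Implicit Defensive.
Section Tree.
Variables (N : nat) (T : {set {set 'I_N}}) (Pa : {set 'I_N} -> {set 'I_N}).
Hypothesis HT : is_mode_tree T Pa.

Lemma childP c mu : c \in children T Pa mu -> [/\ c \in T, c != (Defs.root N) & Pa c = mu].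
Proof. by rewrite inE => /and3P[? ? /eqP]. Qed.

Lemma par_in c : c \in T -> c != (Defs.root N) -> Pa c \in T.
Proof. by case: HT => _ [H _ _ _ _]; apply: H. Qed.

Lemma child_par c mu : c \in children T Pa mu -> mu \in T.
Proof. by move=> /childP[cT cr <-]; apply: par_in. Qed.

Lemma iter_period (x : {set 'I_N}) p : iter p Pa x = x -> forall m b, iter (m * p + b) Pa x = iter b Pa x.
Proof.
move=> Hp; elim=> [|m IH] b; first by rewrite mul0n add0n.
by rewrite mulSn -addnA iterD IH -iterD addnC iterD Hp.
Qed.

Lemma cycle_false x p : x \in T -> (0 < p)%N -> iter p Pa x = x ->
  (forall i, (i < p)%N -> iter i Pa x != (Defs.root N)) -> False.
Proof.
move=> xT p0 Hp Hi; case: HT => _ [_ H _ _ _]; have [k Hk] := H x xT.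
have := Hi (k %% p)%N (ltn_pmod k p0); rewrite -(iter_period Hp (k %/ p)) -divn_eq Hk.
by rewrite eqxx.
Qed.

Lemma leaf_iff mu : mu \in T -> is_leaf T Pa mu <-> exists n : 'I_N, mu = [set n].
Proof. by case: HT => _ [_ _ _ H _]; apply: H. Qed.

Lemma child_proper c mu : c \in children T Pa mu -> c \proper mu.
Proof.
move=> Hc; have muT := child_par Hc; have [cT cr Pc] := childP Hc.
rewrite finset.properEneq; apply/andP; split.
  apply/eqP => E; subst mu; apply: (@cycle_false c 1) => //.
  by case=> // _; rewrite /=.
case: HT => _ [_ _ _ _ H].
have nl : ~~ is_leaf T Pa mu.
  by rewrite /is_leaf; apply/negP => /eqP E; move: Hc; rewrite E inE.
rewrite (H mu muT nl); exact: (finset.bigcup_sup _ Hc).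
Qed.

Lemma child_card c mu : c \in children T Pa mu -> (#|c| < #|mu|)%N.
Proof. by move=> /child_proper; apply: fintype.proper_card. Qed.

Lemma T_card mu : mu \in T -> (0 < #|mu|)%N.
Proof.
move=> muT; case: (boolP (is_leaf T Pa mu)) => [/(leaf_iff muT)[n ->]|nl].
  by rewrite cards1.
by move: nl; rewrite /is_leaf; case/set0Pn => c /child_card; apply: leq_ltn_trans.
Qed.

Lemma card_le_N (mu : {set 'I_N}) : (#|mu| <= N)%N.
Proof. by rewrite -[X in (_ <= X)%N]card_ord max_card. Qed.

Lemma card_root : #|(Defs.root N)| = N.
Proof. by rewrite /root cardsT card_ord. Qed.

Lemma root_in : (Defs.root N) \in T.
Proof. by case: HT. Qed.

Lemma pick_none mu : mu \in T -> ~~ is_leaf T Pa mu ->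
  [pick n : 'I_N | mu == [set n]] = None.
Proof.
move=> muT nl; case: pickP => [n /eqP E|//].
by move: nl; rewrite (proj2 (leaf_iff muT)) //; exists n.
Qed.

Lemma pick_set1 (n : 'I_N) : [pick n' : 'I_N | [set n] == [set n']] = Some n.
Proof.
case: pickP => [n' /eqP /set1_inj -> //|H].
by have := H n; rewrite eqxx.
Qed.

Lemma child_notleaf c mu : c \in children T Pa mu -> ~~ is_leaf T Pa mu.
Proof. by move=> Hc; rewrite /is_leaf; apply/set0Pn; exists c. Qed.

Variable nu : {set 'I_N}.
Fixpoint occ k mu : bool :=
  (mu == nu) || (if k is k'.+1 then [exists c in children T Pa mu, occ k' c] else false).

Lemma occ_iter k c : occ k c -> exists j, iter j Pa nu = c /\ forall i, (i < j)%N -> iter i Pa nu != (Defs.root N).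
Proof.
elim: k c => [|k IH] c /=; first by rewrite orbF => /eqP ->; exists 0%N.
case/orP => [/eqP ->|/existsP[c' /andP[Hc' /IH[j [Hj Hi]]]]]; first by exists 0%N.
have [_ c'r Pc'] := childP Hc'.
exists j.+1; split; first by rewrite iterS Hj.
move=> i; rewrite ltnS leq_eqVlt => /orP[/eqP ->|]; [by rewrite Hj|exact: Hi].
Qed.

Lemma occ_child_nu k c : nu \in T -> c \in children T Pa nu -> ~~ occ k c.
Proof.
move=> nuT Hc; apply/negP => /occ_iter [j [Hj Hi]].
have [_ cr Pc] := childP Hc.
apply: (@cycle_false nu j.+1) => //; first by rewrite iterS Hj.
move=> i; rewrite ltnS leq_eqVlt => /orP[/eqP ->|]; [by rewrite Hj|exact: Hi].
Qed.

Lemma occ_uniq k1 k2 mu c1 c2 : c1 \in children T Pa mu -> c2 \in children T Pa mu ->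
  occ k1 c1 -> occ k2 c2 -> c1 = c2.
Proof.
move=> H1 H2 /occ_iter[j1 [E1 I1]] /occ_iter[j2 [E2 I2]].
have [_ r1 P1] := childP H1; have [_ r2 P2] := childP H2.
have muT := child_par H1.
wlog le12 : j1 j2 c1 c2 H1 H2 E1 I1 E2 I2 r1 P1 r2 P2 / (j1 <= j2)%N.
  move=> W; case: (leqP j1 j2) => [le|/ltnW le]; first exact: (W j1 j2).
  by apply/esym; apply: (W j2 j1).
move: le12; rewrite leq_eqVlt => /orP[/eqP E|lt]; first by rewrite -E1 -E2 E.
have Emu : mu = iter j1.+1 Pa nu by rewrite iterS E1 P1.
exfalso; apply: (@cycle_false mu (j2 - j1)) => //; first by rewrite subn_gt0.
  rewrite {1}Emu -iterD.
  have -> : (j2 - j1 + j1.+1 = j2.+1)%N by lia.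
  by rewrite iterS E2 P2.
move=> i Hi; rewrite Emu -iterD.
case: (ltngtP (i + j1.+1) j2) => [h|h|->]; first exact: I2.
  by exfalso; lia.
by rewrite E2.
Qed.

Lemma occ_mono k k' mu : (k <= k')%N -> occ k mu -> occ k' mu.
Proof.
elim: k k' mu => [|k IH] [|k'] mu //= Hk; first by rewrite orbF => ->.
case/orP => [->//|/existsP[c /andP[Hc Ho]]]; apply/orP; right.
by apply/existsP; exists c; rewrite Hc (IH k').
Qed.

Lemma occ_root : nu \in T -> occ N ((Defs.root N)).
Proof.
move=> nuT; case: HT => _ [_ H _ _ _]; have ex := H nu nuT.
pose P := fun k => iter k Pa nu == (Defs.root N).
have exP : exists k, P k by case: ex => k Hk; exists k; apply/eqP.
pose k0 := ex_minn exP.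
have Hk0 : P k0 by rewrite /k0; case: ex_minnP.
have Hmin : forall i, (i < k0)%N -> iter i Pa nu != (Defs.root N).
  move=> i Hi; apply/negP => Hr.
  have : (k0 <= i)%N by rewrite /k0; case: ex_minnP => m _ /(_ i Hr).
  by rewrite leqNgt Hi.
suff : forall m, (m <= k0)%N -> iter m Pa nu \in T /\ occ #|iter m Pa nu| (iter m Pa nu).
  by case/(_ k0 (leqnn _)) => _; rewrite (eqP Hk0) card_root.
elim=> [|m IH] Hm; first by split => //; case: #|nu| => /= [|?]; rewrite eqxx.
have [cT Hoc] := IH (ltnW Hm).
have cr := Hmin m Hm.
have Hc : iter m Pa nu \in children T Pa (iter m.+1 Pa nu) by rewrite inE cT cr iterS eqxx.
split; first by rewrite iterS; apply: par_in.
have := child_card Hc; case E: #|iter m.+1 Pa nu| => [//|n] Hlt /=.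
apply/orP; right; apply/existsP; exists (iter m Pa nu); rewrite Hc /=.
by apply: occ_mono Hoc; rewrite -ltnS.
Qed.

End Tree.
Section Tens.
Variables (R : realType) (N : nat) (D : 'I_N -> nat) (T : {set {set 'I_N}})
  (Pa : {set 'I_N} -> {set 'I_N}) (Rint : {set 'I_N} -> nat).
Hypothesis HT : is_mode_tree T Pa.
Local Notation tensR := (tensor R D).
Local Notation tns := (@tens R N D T Pa Rint).
Local Notation itn := (@itens R N D T Pa Rint).
Local Notation ch := (children T Pa).
Local Notation nov := (@no_ov R N D).

Lemma fuelS ov W k mu r : mu \in T -> (#|mu| <= k)%N -> tns ov W k mu r = tns ov W k.+1 mu r.
Proof.
elim: k mu r => [|k IH] mu r muT Hk.
  by have := T_card HT muT; move: Hk; rewrite leqn0 => /eqP ->.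
rewrite [LHS]/= [RHS]/=; case: (ov mu r) => // .
case: pickP => [n _|_] //.
apply: funext => i; apply: eq_bigr => r' _; congr (_ * _); apply: eq_bigr => c Hc.
rewrite (IH c r') //; first by case/childP: Hc.
by rewrite -ltnS; apply: leq_trans Hk; apply: child_card Hc.
Qed.

Lemma fuel_eq ov W k k' mu r : mu \in T -> (#|mu| <= k)%N -> (#|mu| <= k')%N ->
  tns ov W k mu r = tns ov W k' mu r.
Proof.
move=> muT.
wlog le : k k' / (k <= k')%N.
  move=> Wl Hk Hk'; case: (leqP k k') => [le|/ltnW le]; first exact: Wl.
  by apply/esym; apply: Wl.
move=> Hk _; rewrite -(subnKC le); elim: (k' - k)%N => [|d IH]; first by rewrite addn0.
rewrite addnS -fuelS //; by apply: leq_trans Hk (leq_addr _ _).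
Qed.

Lemma itens_int W mu r : mu \in T -> ~~ is_leaf T Pa mu ->
  itn W mu r = fun i => \sum_(r' < rk D Rint mu) W mu r' r * \prod_(c in ch mu) itn W c r' i.
Proof.
move=> muT nl; rewrite /itens.
suff H : forall k, (#|mu| <= k)%N -> tns nov W k mu r =
    fun i => \sum_(r' < rk D Rint mu) W mu r' r * \prod_(c in ch mu) tns nov W N c r' i.
  exact/H/card_le_N.
case=> [|k] Hk; first by have := T_card HT muT; rewrite ltnNge Hk.
rewrite /= (pick_none HT muT nl).
apply: funext => i; apply: eq_bigr => r' _; congr (_ * _); apply: eq_bigr => c Hc.
have cT : c \in T by case/childP: Hc.
rewrite (@fuel_eq _ _ k N c r') //; last exact: card_le_N.
by rewrite -ltnS; apply: leq_trans Hk; apply: child_card Hc.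
Qed.
Lemma itens_leaf W (n : 'I_N) r : itn W [set n] r = fun i => W [set n] (i n) r.
Proof.
rewrite /itens; have N0 : (0 < N)%N by apply: leq_ltn_trans (leq0n n) (ltn_ord n).
suff H : forall k, (0 < k)%N -> tns nov W k [set n] r = fun i => W [set n] (i n) r by exact: H.
by case=> // k _ /=; rewrite pick_set1.
Qed.
Lemma tens_self ov W : (forall mu r, ov mu r = None \/ ov mu r = Some (itn W mu r)) ->
  forall k mu r, mu \in T -> (#|mu| <= k)%N -> tns ov W k mu r = tns nov W k mu r.
Proof.
move=> Hov; elim=> [|k IH] mu r muT Hk.
  by have := T_card HT muT; move: Hk; rewrite leqn0 => /eqP ->.
rewrite [LHS]/=; case: (Hov mu r) => ->.
  rewrite [RHS]/=; case: pickP => [n _|_] //.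
  apply: funext => i; apply: eq_bigr => r' _; congr (_ * _); apply: eq_bigr => c Hc.
  have cT : c \in T by case/childP: Hc.
  rewrite (IH c r') //.
  by rewrite -ltnS; apply: leq_trans Hk; apply: child_card Hc.
rewrite /itens; apply: fuel_eq => //; exact: card_le_N.
Qed.

Section Phi.
Variable nu : {set 'I_N}.
Hypothesis nuT : nu \in T.
Hypothesis nuI : ~~ is_leaf T Pa nu.

Definition ovg (g : nat -> tensR) : {set 'I_N} -> nat -> option tensR :=
  fun mu r => if mu == nu then Some (g r) else None.

Lemma tens_nu g W k r : tns (ovg g) W k nu r = g r.
Proof. by case: k => [|k] /=; rewrite /ovg eqxx. Qed.

Lemma tens_off0 g W mu r : mu != nu -> tns (ovg g) W 0 mu r = fun _ => 0.
Proof. by move=> H; rewrite /= /ovg (negbTE H). Qed.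

Lemma tens_off g W k mu r : mu != nu -> tns (ovg g) W k.+1 mu r =
  if [pick n : 'I_N | mu == [set n]] is Some n then fun i => W mu (i n) r else
  fun i => \sum_(r' < rk D Rint mu) W mu r' r * \prod_(c in ch mu) tns (ovg g) W k c r' i.
Proof. by move=> H; rewrite /= /ovg (negbTE H). Qed.

Local Notation occ := (occ T Pa nu).

Lemma O1a ov1 ov2 W1 W2 k mu r : ~~ occ k mu ->
  (forall m r', m != nu -> ov1 m r' = ov2 m r') ->
  (forall m a b, m != nu -> W1 m a b = W2 m a b) ->
  tns ov1 W1 k mu r = tns ov2 W2 k mu r.
Proof.
elim: k mu r => [|k IH] mu r /=.
  by rewrite orbF => Hm Hov _; rewrite Hov.
rewrite negb_or => /andP[Hm Hex] Hov HW; rewrite Hov //.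
case: (ov2 mu r) => // .
case: pickP => [n _|_]; apply: funext => i; first by rewrite HW.
apply: eq_bigr => r' _; rewrite HW //; congr (_ * _); apply: eq_bigr => c Hc.
rewrite (IH c r') //; apply: contra Hex => Ho; apply/existsP; exists c; by rewrite Hc.
Qed.

Lemma O1b x W1 W2 k mu r : x \in ch nu -> ~~ occ k mu ->
  (forall m a b, m != x -> W1 m a b = W2 m a b) -> mu != x ->
  tns nov W1 k mu r = tns nov W2 k mu r.
Proof.
move=> Hx; have [_ xr Px] := childP Hx.
elim: k mu r => [|k IH] mu r //=.
rewrite negb_or => /andP[Hm Hex] HW Hmx.
case: pickP => [n _|_]; apply: funext => i; first by rewrite HW.
apply: eq_bigr => r' _; rewrite HW //; congr (_ * _); apply: eq_bigr => c Hc.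
have [_ cr Pc] := childP Hc.
rewrite (IH c r') //; first by apply: contra Hex => Ho; apply/existsP; exists c; rewrite Hc.
by apply/eqP => E; move: Hm; rewrite -Pc E Px eqxx.
Qed.

Lemma PhiW_nu g W1 W2 k mu r :
  (forall m a b, m != nu -> W1 m a b = W2 m a b) ->
  tns (ovg g) W1 k mu r = tns (ovg g) W2 k mu r.
Proof.
move=> HW; elim: k mu r => [|k IH] mu r.
  by case: (eqVneq mu nu) => [->|H]; rewrite ?tens_nu ?tens_off0.
case: (eqVneq mu nu) => [->|H]; rewrite ?tens_nu // !tens_off //.
case: pickP => [n _|_]; apply: funext => i; first by rewrite HW.
apply: eq_bigr => r' _; rewrite HW //; congr (_ * _); apply: eq_bigr => c Hc.
by rewrite (IH c r').
Qed.

Lemma PhiW_x x g W1 W2 k mu r : x \in ch nu ->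
  (forall m a b, m != x -> W1 m a b = W2 m a b) -> mu != x ->
  tns (ovg g) W1 k mu r = tns (ovg g) W2 k mu r.
Proof.
move=> Hx HW; have [_ xr Px] := childP Hx.
elim: k mu r => [|k IH] mu r Hmx.
  by case: (eqVneq mu nu) => [->|H]; rewrite ?tens_nu ?tens_off0.
case: (eqVneq mu nu) => [->|H]; rewrite ?tens_nu // !tens_off //.
case: pickP => [n _|_]; apply: funext => i; first by rewrite HW.
apply: eq_bigr => r' _; rewrite HW //; congr (_ * _); apply: eq_bigr => c Hc.
have [_ cr Pc] := childP Hc.
rewrite (IH c r') //.
by apply/eqP => E; move: H; rewrite -Pc E Px eqxx.
Qed.

Lemma restr W k mu r g1 g2 : (r < prk D Pa Rint mu)%N ->
  (forall r', (r' < prk D Pa Rint nu)%N -> g1 r' = g2 r') ->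
  tns (ovg g1) W k mu r = tns (ovg g2) W k mu r.
Proof.
move=> + Hg; elim: k mu r => [|k IH] mu r Hr.
  by case: (eqVneq mu nu) => [E|H]; rewrite ?E ?tens_nu ?tens_off0 // Hg // -E.
case: (eqVneq mu nu) => [E|H]; first by rewrite E !tens_nu Hg // -E.
rewrite !tens_off //.
case: pickP => [n _|_] //; apply: funext => i.
apply: eq_bigr => r' _; congr (_ * _); apply: eq_bigr => c Hc.
have [_ cr Pc] := childP Hc.
by rewrite (IH c r') // /prk (negbTE cr) Pc.
Qed.

Lemma Lin W k mu r g g1 g2 (a : R) : occ k mu ->
  (forall r' i, g r' i = g1 r' i + a * g2 r' i) ->
  forall i, tns (ovg g) W k mu r i = tns (ovg g1) W k mu r i + a * tns (ovg g2) W k mu r i.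
Proof.
move=> + Hg; elim: k mu r => [|k IH] mu r.
  case: (eqVneq mu nu) => [->|H]; first by move=> _ i; rewrite !tens_nu.
  by rewrite /= orbF (negbTE H).
case: (eqVneq mu nu) => [->|H]; first by move=> _ i; rewrite !tens_nu.
move=> Ho; have : [exists c in ch mu, occ k c] by move: Ho => /=; rewrite (negbTE H).
move=> /existsP[c0 /andP[Hc0 Ho0]].
have muT := child_par HT Hc0; have nl := child_notleaf Hc0.
rewrite !tens_off // (pick_none HT muT nl) => i.
have Hs : forall h r', \prod_(c in ch mu) tns (ovg h) W k c r' i =
    tns (ovg h) W k c0 r' i * \prod_(c in ch mu | c != c0) tns nov W k c r' i.
  move=> h r'; rewrite (bigD1 c0) //=; congr (_ * _); apply: eq_bigr => c /andP[Hc Hne].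
  have Hno : ~~ occ k c.
    by apply/negP => Hoc; move/eqP: Hne; apply; apply: (occ_uniq HT Hc Hc0 Hoc Ho0).
  rewrite (@O1a _ nov _ W) // => m r'' Hm; by rewrite /ovg (negbTE Hm).
under eq_bigr do rewrite Hs (IH c0 _ Ho0).
under [X in _ = X + _]eq_bigr do rewrite Hs.
under [X in _ = _ + _ * X]eq_bigr do rewrite Hs.
rewrite mulr_sumr -big_split; apply: eq_bigr => r' _ /=; ring.
Qed.

Lemma Lin0 W k mu r g : occ k mu -> (forall r' i, g r' i = 0) ->
  forall i, tns (ovg g) W k mu r i = 0.
Proof.
move=> Ho Hg i.
have := @Lin W k mu r g g g 1 Ho.
have H' : forall r' i, g r' i = g r' i + 1 * g r' i by move=> r' j; rewrite !Hg; ring.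
move=> /(_ H' i); set x := tns _ _ _ _ _ _; lra.
Qed.

Lemma LinSum W k mu r : occ k mu -> forall n (a : 'I_n -> R) (G : 'I_n -> nat -> tensR) g,
  (forall r' i, g r' i = \sum_(j < n) a j * G j r' i) ->
  forall i, tns (ovg g) W k mu r i = \sum_(j < n) a j * tns (ovg (G j)) W k mu r i.
Proof.
move=> Ho; elim=> [|n IH] a G g Hg i.
  by rewrite big_ord0; apply: Lin0 => // r' j; rewrite Hg big_ord0.
pose g' := fun r' j => \sum_(l < n) a (widen_ord (leqnSn n) l) * G (widen_ord (leqnSn n) l) r' j.
rewrite (@Lin W k mu r g g' (G ord_max) (a ord_max) Ho); last first.
  by move=> r' j; rewrite Hg big_ord_recr.
by rewrite big_ord_recr /= (IH (fun l => a (widen_ord (leqnSn n) l)) (fun l => G (widen_ord (leqnSn n) l)) g').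
Qed.
Local Notation rt := (Defs.root N).
Definition Phi W g := tns (ovg g) W N rt 0.
Definition Pp W r : tensR := fun i => \prod_(c in ch nu) itn W c r i.

Lemma Hocc : occ N rt.
Proof. exact (occ_root HT nuT). Qed.

Lemma end_Phi W : end_tensor T Pa Rint W = Phi W (itn W nu).
Proof.
rewrite /end_tensor /Phi; symmetry; apply: tens_self; last first.
- by rewrite card_root.
- exact: root_in HT.
by move=> mu r; rewrite /ovg; case: eqP => [->|_]; [right|left].
Qed.

Lemma sum_delta n (F : nat -> R) j0 : (j0 < n)%N ->
  \sum_(i < n) (i == j0 :> nat)%:R * F i = F j0.
Proof.
move=> H; rewrite (bigD1 (Ordinal H)) //= eqxx mul1r big1 ?addr0 // => i Hi.
case: eqP => [E|_]; last by rewrite mul0r.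
by move: Hi; rewrite (_ : i = Ordinal H) ?eqxx //; apply: val_inj.
Qed.

Lemma sum_upd n (f F : nat -> R) j0 (b : bool) s : (j0 < n)%N ->
  \sum_(i < n) (if (i == j0 :> nat) && b then f i + s else f i) * F i =
  \sum_(i < n) f i * F i + s * (b%:R * F j0).
Proof.
move=> H; have -> : s * (b%:R * F j0) = \sum_(i < n) (i == j0 :> nat)%:R * (s * (b%:R * F i)).
  by rewrite (sum_delta (fun i => s * (b%:R * F i))) .
rewrite -big_split; apply: eq_bigr => i _ /=; case: eqP => _; case: b => /=; ring.
Qed.

Lemma Phi_ext W g1 g2 : (forall r' i, g1 r' i = g2 r' i) -> Phi W g1 = Phi W g2.
Proof. by move=> H; congr Phi; apply: funext => r'; apply: funext => i; apply: H. Qed.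

Lemma row_upd W r j s : (r < rk D Rint nu)%N ->
  end_tensor T Pa Rint (upd W nu r j s) =
  fun i => end_tensor T Pa Rint W i + s * Phi W (fun r' t => (r' == j)%:R * Pp W r t) i.
Proof.
move=> Hr; rewrite !end_Phi.
have -> : Phi (upd W nu r j s) (itn (upd W nu r j s) nu) = Phi W (itn (upd W nu r j s) nu).
  by apply: PhiW_nu => m a b Hm; rewrite /upd (negbTE Hm).
apply: funext => t; rewrite /Phi.
rewrite (@Lin W N rt 0 _ (itn W nu) (fun r' t => (r' == j)%:R * Pp W r t) s Hocc) //.
move=> r' i; rewrite !itens_int //.
have Hc : forall c r'', c \in ch nu -> itn (upd W nu r j s) c r'' = itn W c r''.
  move=> c r'' Hc; rewrite /itens; apply: O1a; first exact (occ_child_nu HT _ nuT Hc).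
    by [].
  by move=> m a b Hm; rewrite /upd (negbTE Hm).
under eq_bigr do under eq_bigr do rewrite Hc //.
rewrite /upd eqxx /=.
by rewrite (sum_upd (fun r'' => W nu r'' r') (fun r'' => \prod_(c in ch nu) itn W c r'' i)).
Qed.
Definition Qf W (x : {set 'I_N}) (i0 : nat) : tensR :=
  if [pick n : 'I_N | x == [set n]] is Some n then fun t => ((t n : nat) == i0)%:R
  else fun t => \prod_(c' in ch x) itn W c' i0 t.

Lemma itn_Q W x r'' : x \in T -> forall t,
  itn W x r'' t = \sum_(i < rk D Rint x) W x i r'' * Qf W x i t.
Proof.
move=> xT t; rewrite /Qf /rk; case: pickP => [n /eqP Ex|Hn].
  rewrite Ex itens_leaf /=.
  rewrite (eq_bigr (fun i : 'I_(D n) => ((i : nat) == t n)%:R * W [set n] i r'')).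
    by rewrite (sum_delta (fun i => W [set n] i r'')).
  by move=> i _; rewrite eq_sym mulrC.
have nl : ~~ is_leaf T Pa x.
  by apply/negP => /(leaf_iff HT xT) [n E]; have := Hn n; rewrite E eqxx.
by rewrite itens_int //= /rk (pick_none HT xT nl).
Qed.

Lemma Q_upd W x i0 r s i : x \in ch nu -> Qf (upd W x i0 r s) x i = Qf W x i.
Proof.
move=> Hx; rewrite /Qf; case: pickP => // _.
apply: funext => t; apply: eq_bigr => c' Hc'.
rewrite /itens; congr (_ t); apply: (O1b (x := x)) => //.
- apply/negP => Ho; have : occ N.+1 x.
    by rewrite /=; apply/orP; right; apply/existsP; exists c'; rewrite Hc'.
  by move/negP: (occ_child_nu HT N.+1 nuT Hx).
- by move=> m a b Hm; rewrite /upd (negbTE Hm).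
- by apply/eqP => E; move: (child_card HT Hc'); rewrite E ltnn.
Qed.

Lemma itn_x_upd W x i0 r s r'' : x \in ch nu -> (i0 < rk D Rint x)%N -> forall t,
  itn (upd W x i0 r s) x r'' t = itn W x r'' t + s * ((r'' == r)%:R * Qf W x i0 t).
Proof.
move=> Hx Hi t; have [xT _ _] := childP Hx.
rewrite !itn_Q //; under eq_bigr do rewrite Q_upd //.
rewrite /upd eqxx /=.
by rewrite (sum_upd (fun i => W x i r'') (fun i => Qf W x i t)).
Qed.

Lemma col_upd W x i0 r s : x \in ch nu -> (i0 < rk D Rint x)%N -> (r < rk D Rint nu)%N ->
  end_tensor T Pa Rint (upd W x i0 r s) = fun t => end_tensor T Pa Rint W t +
    s * Phi W (fun r' t => W nu r r' * Qf W x i0 t * \prod_(c in ch nu | c != x) itn W c r t) t.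
Proof.
move=> Hx Hi Hr; have [xT xr Px] := childP Hx.
have xnu : x != nu by apply/eqP => E; move: (child_card HT Hx); rewrite E ltnn.
rewrite !end_Phi.
have -> : Phi (upd W x i0 r s) (itn (upd W x i0 r s) nu) = Phi W (itn (upd W x i0 r s) nu).
  rewrite /Phi; apply: (PhiW_x (x := x)) => //; last by rewrite eq_sym.
  by move=> m a b Hm; rewrite /upd (negbTE Hm).
apply: funext => t; rewrite /Phi.
rewrite (@Lin W N rt 0 _ (itn W nu) (fun r' t => W nu r r' * Qf W x i0 t * \prod_(c in ch nu | c != x) itn W c r t) s Hocc) //.
move=> r' j; rewrite !itens_int //.
have Hn : forall a b, upd W x i0 r s nu a b = W nu a b.
  by move=> a b; rewrite /upd eq_sym (negbTE xnu).
have Hc : forall c r'', c \in ch nu -> c != x -> itn (upd W x i0 r s) c r'' = itn W c r''.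
  move=> c r'' Hc Hcx; rewrite /itens; apply: (O1b (x := x)) => //.
    exact (occ_child_nu HT _ nuT Hc).
  by move=> m a b Hm; rewrite /upd (negbTE Hm).
have HP : forall r'', \prod_(c in ch nu) itn (upd W x i0 r s) c r'' j =
    (itn W x r'' j + s * ((r'' == r)%:R * Qf W x i0 j)) * \prod_(c in ch nu | c != x) itn W c r'' j.
  move=> r''; rewrite (bigD1 x) //= itn_x_upd //; congr (_ * _).
  by apply: eq_bigr => c /andP[H1 H2]; rewrite Hc.
have HP0 : forall r'', \prod_(c in ch nu) itn W c r'' j =
    itn W x r'' j * \prod_(c in ch nu | c != x) itn W c r'' j.
  by move=> r''; rewrite (bigD1 x).
have Hn' : upd W x i0 r s nu = W nu by apply: funext => a; apply: funext => b; apply: Hn.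
rewrite Hn'.
rewrite (eq_bigr (fun r'' : 'I_(rk D Rint nu) => W nu r'' r' * ((itn W x r'' j + s * (((r'' : nat) == r)%:R * Qf W x i0 j)) * \prod_(c in ch nu | c != x) itn W c r'' j))); last first.
  by move=> r'' _; congr (_ * _); exact: HP.
rewrite [X in _ = X + _](eq_bigr (fun r'' : 'I_(rk D Rint nu) => W nu r'' r' * (itn W x r'' j * \prod_(c in ch nu | c != x) itn W c r'' j))); last first.
  by move=> r'' _; congr (_ * _); exact: HP0.
rewrite -(sum_delta (fun r'' => s * (W nu r'' r' * Qf W x i0 j * \prod_(c in ch nu | c != x) itn W c r'' j)) Hr).
rewrite -big_split; apply: eq_bigr => r'' _ /=; ring.
Qed.

Definition Z (W : weights R N) r := Phi W (fun r' t => W nu r r' * Pp W r t).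

Lemma row_sum (W : weights R N) r t :
  \sum_(j < prk D Pa Rint nu) W nu r j * Phi W (fun r' t => (r' == j)%:R * Pp W r t) t = Z W r t.
Proof.
rewrite /Phi /Z.
rewrite -(@LinSum W N rt 0 Hocc _ (fun j => W nu r j) (fun j r' t => (r' == j)%:R * Pp W r t)
  (fun r' t => \sum_(j < prk D Pa Rint nu) W nu r j * ((r' == j)%:R * Pp W r t))) //.
congr (_ t); apply: restr; first by rewrite /prk eqxx.
move=> r' Hr'; apply: funext => t'.
rewrite (eq_bigr (fun j : 'I_(prk D Pa Rint nu) => ((j : nat) == r')%:R * (W nu r j * Pp W r t'))).
  by rewrite (sum_delta (fun j => W nu r j * Pp W r t')).
by move=> j _; rewrite eq_sym; ring.
Qed.

Lemma col_sum (W : weights R N) x r t : x \in ch nu ->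
  \sum_(i < rk D Rint x) W x i r * Phi W (fun r' t =>
     W nu r r' * Qf W x i t * \prod_(c in ch nu | c != x) itn W c r t) t = Z W r t.
Proof.
move=> Hx; have [xT _ _] := childP Hx.
rewrite /Phi /Z.
rewrite -(@LinSum W N rt 0 Hocc _ (fun i => W x i r)
  (fun i r' t => W nu r r' * Qf W x i t * \prod_(c in ch nu | c != x) itn W c r t)
  (fun r' t => \sum_(i < rk D Rint x) W x i r * (W nu r r' * Qf W x i t * \prod_(c in ch nu | c != x) itn W c r t))) //.
suff -> : (fun r' t => \sum_(i < rk D Rint x) W x i r * (W nu r r' * Qf W x i t * \prod_(c in ch nu | c != x) itn W c r t)) = (fun r' t => W nu r r' * Pp W r t) by [].
apply: funext => r'; apply: funext => t'.
have -> : Pp W r t' = itn W x r t' * \prod_(c in ch nu | c != x) itn W c r t' by rewrite /Pp (bigD1 x).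
rewrite (itn_Q _ _ xT) mulr_suml mulr_sumr; apply: eq_bigr => i _; ring.
Qed.

Lemma Z0 (W : weights R N) g : (forall r' t, g r' t = 0) -> Phi W g = fun _ => 0.
Proof. by move=> H; apply: funext => t; apply: Lin0 => //; exact: Hocc. Qed.

Lemma sigmaE (W : weights R N) r : (r < rk D Rint nu)%N -> forall t,
  sigma D T Pa Rint W nu r * E_tensor T Pa Rint W nu r t = Z W r t.
Proof.
move=> Hr t; rewrite /E_tensor.
case: eqP => [Hs|Hs]; last first.
  rewrite -/(Phi W (fun r' i => (sigma D T Pa Rint W nu r)^-1 * W nu r r' * Pp W r i)).
  rewrite /Phi (@Lin W N rt 0 _ (fun _ _ => 0) (fun r' t => W nu r r' * Pp W r t)
     (sigma D T Pa Rint W nu r)^-1 Hocc); last by move=> r' i; rewrite /Pp; ring.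
  rewrite (@Lin0 W N rt 0 (fun _ _ => 0) Hocc) // add0r mulrA mulfV ?mul1r //.
  exact/eqP.
rewrite mulr0; apply/esym.
move: Hs; rewrite /sigma => /eqP; rewrite mulf_eq0 => /orP[].
  rewrite sqrtr_eq0 => Hle.
  have H0 : forall j, (j < prk D Pa Rint nu)%N -> W nu r j = 0.
    move=> j Hj.
    have Hsum : \sum_(j < prk D Pa Rint nu) W nu r j ^+ 2 = 0.
      by apply/le_anti; rewrite Hle /= sumr_ge0 // => i _; rewrite sqr_ge0.
    have := @psumr_eq0P _ _ predT (fun j : 'I_(prk D Pa Rint nu) => W nu r j ^+ 2)
      (fun i _ => sqr_ge0 _) Hsum (Ordinal Hj) isT.
    by move/eqP; rewrite sqrf_eq0 => /eqP.
  rewrite /Z /Phi (@restr _ _ _ _ _ (fun _ _ => 0)); first by rewrite (@Lin0 W N rt 0 _ Hocc).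
    by rewrite /prk eqxx.
  by move=> r' Hr'; apply: funext => i; rewrite H0 // mul0r.
move=> /prodf_eq0 [c Hc]; rewrite sqrtr_eq0 => Hle.
have [cT _ _] := childP Hc.
have H0 : forall i, (i < rk D Rint c)%N -> W c i r = 0.
  move=> i Hi.
  have Hsum : \sum_(i < rk D Rint c) W c i r ^+ 2 = 0.
    by apply/le_anti; rewrite Hle /= sumr_ge0 // => j _; rewrite sqr_ge0.
  have := @psumr_eq0P _ _ predT (fun i : 'I_(rk D Rint c) => W c i r ^+ 2)
    (fun i _ => sqr_ge0 _) Hsum (Ordinal Hi) isT.
  by move/eqP; rewrite sqrf_eq0 => /eqP.
rewrite /Z /Phi (@Lin0 W N rt 0 _ Hocc) // => r' i.
rewrite /Pp (bigD1 c) //= itn_Q // big1 ?mul0r ?mulr0 ?mul0r //.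
by move=> j _; rewrite H0 // mul0r.
Qed.
End Phi.
End Tens.
Section Calc.
Variables (R : realType) (N : nat) (D : 'I_N -> nat).
Local Notation tensR := (tensor R D).

Lemma tnorm_ge0 (Y : tensR) : 0 <= tnorm Y.
Proof. exact: sqrtr_ge0. Qed.

Lemma tnorm_scale (h : R) (Y : tensR) : tnorm (fun i => h * Y i) = `|h| * tnorm Y.
Proof.
rewrite /tnorm /tdot.
have -> : \sum_i (h * Y i) * (h * Y i) = h ^+ 2 * \sum_i Y i * Y i.
  by rewrite mulr_sumr; apply: eq_bigr => i _; ring.
by rewrite sqrtrM ?sqr_ge0 // sqrtr_sqr.
Qed.

Lemma tdot_scale (G Y : tensR) h : tdot G (fun i => h * Y i) = h * tdot G Y.
Proof. by rewrite /tdot mulr_sumr; apply: eq_bigr => i _; ring. Qed.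

Lemma tdot_sum (G : tensR) n (a : 'I_n -> R) (Y : 'I_n -> tensR) :
  tdot G (fun t => \sum_(j < n) a j * Y j t) = \sum_(j < n) a j * tdot G (Y j).
Proof.
rewrite /tdot; under eq_bigr do rewrite mulr_sumr.
rewrite exchange_big; apply: eq_bigr => j _; rewrite mulr_sumr; apply: eq_bigr => i _; ring.
Qed.

Lemma deriv_dir (L : tensR -> R) (G X Y : tensR) : has_gradient L X G ->
  is_derive (0 : R) (1 : R) (fun s : R => L (fun i => X i + s * Y i)) (tdot G Y).
Proof.
move=> HG; set f := fun s : R => L (fun i => X i + s * Y i).
have Hc : ((fun h : R => h^-1 *: ((f \o shift 0) (h *: 1) - f 0)) @ 0^' --> tdot G Y)%classic.
  apply/cvgrPdist_le => e e0.
  set M := tnorm Y + 1.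
  have M0 : 0 < M by rewrite /M; have := tnorm_ge0 Y; lra.
  have [d d0 Hd] := HG (e / M) (divr_gt0 e0 M0).
  near=> h.
  have hn0 : h != 0 by near: h; exact: nbhs_dnbhs_neq.
  have hd : `|h| < d / M by near: h; apply: dnbhs0_lt; exact: divr_gt0.
  have Hn : tnorm (fun i => h * Y i) < d.
    rewrite tnorm_scale; apply: (@le_lt_trans _ _ (`|h| * M)).
      by apply: ler_wpM2l => //; rewrite /M lerDl.
    by rewrite -ltr_pdivlMr.
  have := Hd _ Hn; rewrite tdot_scale tnorm_scale => H.
  rewrite /= /f; have -> : h%:A = h :> R by rewrite -[RHS]mulr1.
  rewrite addr0.
  have -> : (fun i => X i + 0 * Y i) = X by apply: funext => i; rewrite mul0r addr0.
  set A := L (fun i => X i + h * Y i) - L X.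
  change (h^-1 *: A) with (h^-1 * A).
  have -> : tdot G Y - h^-1 * A = - h^-1 * (A - h * tdot G Y).
    by field; exact: hn0.
  rewrite normrM normrN normfV.
  rewrite -(@ler_pM2l _ `|h|) ?normr_gt0 // mulrA mulfV ?normr_eq0 // mul1r.
  apply: (le_trans H).
  rewrite mulrCA; apply: ler_wpM2l => //.
  rewrite mulrAC ler_pdivrMr //; apply: ler_wpM2l; first exact: ltW.
  by rewrite /M lerDl.
apply: DeriveDef; first by apply/cvg_ex; exists (tdot G Y).
exact: (cvg_lim (@Rhausdorff R) Hc).
Unshelve. all: by end_near.
Qed.
End Calc.
Lemma dphi_eq (R : realType) (N : nat) (D : 'I_N -> nat) T Pa Rint (L : tensor R D -> R) gL
  (W : weights R N) nu i j (X Y : tensor R D) :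
  (forall X, has_gradient L X (gL X)) ->
  (forall s, end_tensor T Pa Rint (upd W nu i j s) = fun t => X t + s * Y t) ->
  dphi T Pa Rint L W nu i j = tdot (gL X) Y.
Proof.
move=> Hg HE; rewrite /dphi /phi.
have -> : (fun s => L (end_tensor T Pa Rint (upd W nu i j s))) = (fun s => L (fun t => X t + s * Y t)).
  by apply: funext => s; rewrite HE.
rewrite derive1E; have := deriv_dir Y (Hg X); by case.
Qed.

Lemma sq_deriv (R : realType) (t : R) n (f : 'I_n -> R -> R) (df : 'I_n -> R) :
  (forall j, is_derive t 1 (f j) (df j)) ->
  is_derive t 1 (fun s => \sum_(j < n) f j s ^+ 2) (\sum_(j < n) 2 * f j t * df j).
Proof.
move=> Hd.
have -> : (fun s => \sum_(j < n) f j s ^+ 2) = \sum_(j < n) (f j ^+ 2).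
  by apply: funext => s; rewrite fct_sumE; apply: eq_bigr => j _; rewrite exprfctE.
apply: is_derive_eq.
by apply: eq_bigr => j _; rewrite /= expr1.
Qed.
Unset Implicit Arguments.
Theorem lemma13 (R : realType) (N : nat) (D : 'I_N -> nat)
  (T : {set {set 'I_N}}) (Pa : {set 'I_N} -> {set 'I_N})
  (Rint : {set 'I_N} -> nat)
  (L : tensor R D -> R) (gL : tensor R D -> tensor R D)
  (Wt : R -> weights R N) :
  is_mode_tree T Pa ->
  (forall X, has_gradient L X (gL X)) ->
  locally_smooth gL ->
  gradient_flow T Pa Rint L Wt ->
  forall nu nuc r, int_node T Pa nu -> nuc \in children T Pa nu ->
    (r < rk D Rint nu)%N ->
  forall t : R, 0 <= t ->
    let rhs := 2 * sigma D T Pa Rint (Wt t) nu r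
               * tdot (fun i => - gL (end_tensor T Pa Rint (Wt t)) i)
                      (E_tensor T Pa Rint (Wt t) nu r) in
    is_derive t 1 (fun s : R => rownorm2 D Pa Rint (Wt s) nu r) rhs /\
    is_derive t 1 (fun s : R => colnorm2 D Rint (Wt s) nuc r) rhs.
Proof.
move=> HT Hg _ Hflow nu nuc r Hint Hnuc Hr t t0 rhs.
case/andP: Hint => nuT nl.
have [nucT nucr Pnuc] := childP Hnuc.
set W := Wt t.
pose X := @end_tensor R N D T Pa Rint W.
pose G := gL X.
have HZ : rhs = - 2 * tdot G (Z T Pa Rint nu W r).
  rewrite /rhs -/W -/X -/G.
  have -> : tdot (fun i => - G i) (E_tensor T Pa Rint W nu r) = - tdot G (E_tensor T Pa Rint W nu r).
    by rewrite /tdot -sumrN; apply: eq_bigr => i _; ring.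
  rewrite mulrN -mulrA -tdot_scale.
  have -> : (fun i : idx D => sigma D T Pa Rint W nu r * E_tensor T Pa Rint W nu r i) = Z T Pa Rint nu W r.
    by apply: funext => i; rewrite (sigmaE HT nuT W Hr).
  ring.
have Hrk : prk D Pa Rint nuc = rk D Rint nu by rewrite /prk (negbTE nucr) Pnuc.
split.
- rewrite /rownorm2.
  apply: is_derive_eq.
    apply: (@sq_deriv R t _ (fun j s => Wt s nu r j) (fun j => - dphi T Pa Rint L (Wt t) nu r j)).
    by move=> j; apply: Hflow.
  rewrite HZ -/W.
  have Hd : forall j : 'I_(prk D Pa Rint nu), dphi T Pa Rint L W nu r j =
      tdot G (Phi T Pa Rint nu W (fun r' (t : idx D) => ((r' == j)%:R * Pp T Pa Rint nu W r t))).
    move=> j; apply: dphi_eq => // s.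
    exact: (row_upd HT nuT nl W j s Hr).
  under eq_bigr do rewrite Hd.
  have -> : Z T Pa Rint nu W r = fun t' : idx D => \sum_(j < prk D Pa Rint nu) W nu r j *
      Phi T Pa Rint nu W (fun r' (t : idx D) => ((r' == j)%:R * Pp T Pa Rint nu W r t)) t'.
    by apply: funext => t'; rewrite (row_sum Rint HT nuT W r t').
  rewrite tdot_sum mulr_sumr; apply: eq_bigr => j _; ring.
- rewrite /colnorm2.
  apply: is_derive_eq.
    apply: (@sq_deriv R t _ (fun i s => Wt s nuc i r) (fun i => - dphi T Pa Rint L (Wt t) nuc i r)).
    by move=> i; apply: Hflow => //; rewrite Hrk.
  rewrite HZ -/W.
  have Hd : forall i : 'I_(rk D Rint nuc), dphi T Pa Rint L W nuc i r =
      tdot G (Phi T Pa Rint nu W (fun r' (t : idx D) => W nu r r' * Qf T Pa Rint W nuc i t *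
         \prod_(c in children T Pa nu | c != nuc) itens T Pa Rint W c r t)).
    move=> i; apply: dphi_eq => // s.
    exact: (col_upd HT nuT nl W s Hnuc (ltn_ord i) Hr).
  under eq_bigr do rewrite Hd.
  have -> : Z T Pa Rint nu W r = fun t' : idx D => \sum_(i < rk D Rint nuc) W nuc i r *
      Phi T Pa Rint nu W (fun r' (t : idx D) => W nu r r' * Qf T Pa Rint W nuc i t *
         \prod_(c in children T Pa nu | c != nuc) itens T Pa Rint W c r t) t'.
    by apply: funext => t'; rewrite (col_sum Rint HT nuT W r t' Hnuc).
  rewrite tdot_sum mulr_sumr; apply: eq_bigr => j _; ring.
Qed.
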